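(* In the setting described in the context, for every $j\in[\varepsilon^{-1}-1]$ and every $i\in I$ it holds that $\lambda^j_i\le1$ and $\gamma^j_i\le1$.
   Context: A CMK instance is $\mathcal{I}=(I,w,v,m,k)$ with $I$ a finite item set, $w:I\to[0,1]$, $v:I\to\mathbb{R}_{\ge0}$, $m,k\in\mathbb{N}_{>0}$. A configuration is $C\subseteq I$ with $|C|\le k$ and $\sum_{i\in C}w(i)\le1$; $\mathcal{C}$ is the set of configurations and $\mathcal{C}(i)=\{C\in\mathcal{C}:i\in C\}$. A solution is a tuple of $m$ configurations, with value $v$ of their union; $\mathrm{OPT}(\mathcal{I})$ is the maximum value. A fractional solution is $x\in\mathbb{R}_{\ge0}^{\mathcal{C}}$, with $\mathrm{cover}_i(x)=\sum_{C\in\mathcal{C}(i)}x_C$, $\|x\|=\sum_Cx_C$; it is feasible if $\mathrm{cover}(x)\in[0,1]^I$; for $y\in\mathbb{R}^I$, $v(y)=\sum_iy_iv(i)$, and $v(x)=v(\mathrm{cover}(x))$. For $S\subseteq I$ and $\ell\in\mathbb{N}$, $\mathrm{LP}(S,\ell)$ is: maximize $v(x)$ over feasible fractional solutions $x$ with $x_C=0$ whenever $C\not\subseteq S$, and $\|x\|=\ell$. For $\|x\|\ne0$, a random configuration $R$ is distributed by $x$ ($R\sim x$) if $\Pr(R=C)=x_C/\|x\|$. Given $\varepsilon\in(0,0.1)$, $\mathcal{I}$ is $\varepsilon$-simple if $m>\exp(\exp(\varepsilon^{-30}))$ and $\varepsilon m\in\mathbb{N}$. Iterative randomized rounding: let $\varepsilon\in(0,0.1)$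 with $\varepsilon^{-1/2}\in\mathbb{N}$ and $\mathcal{I}$ be $\varepsilon$-simple; let $q=\varepsilon m$ and $S_0=I$. For $j=1,\dots,\varepsilon^{-1}$: let $m_j=m(1-(j-1)\varepsilon)$; let $x^j$ be a $(1-\varepsilon)$-approximate solution of $\mathrm{LP}(S_{j-1},m_j)$ (a feasible solution of value at least $(1-\varepsilon)$ times its optimum), determined by the outcomes of the samples of previous iterations; sample independently $R^j_1,\dots,R^j_q\sim x^j$; set $S_j=S_{j-1}\setminus\bigcup_{b=1}^qR^j_b$. Let $\mathcal{F}_0$ be the trivial $\sigma$-algebra and $\mathcal{F}_j$ the $\sigma$-algebra generated by $\{R^{j'}_b: j'\le j,\ b\in[q]\}$. Fix an optimal solution $(C^*_1,\dots,C^*_m)$ and let $S^*=\bigcup_bC^*_b$ (so $v(S^* )=\mathrm{OPT}(\mathcal{I})$). Define $\gamma^0=\mathbb{1}_{S^*}\in\{0,1\}^I$ (indicator vector of $S^*$). For $j=1,\dots,\varepsilon^{-1}-1$ define $\lambda^j\in\mathbb{R}^I_{\ge0}$ by $\lambda^j_i=\frac{1-j\varepsilon}{1-(j-1)\varepsilon}\cdot\frac{1}{\Pr(i\in S_j\mid\mathcal{F}_{j-1})}\cdot\gamma^{j-1}_i$ for $i\in S_{j-1}$ (this conditional probability is positive for such $i$) and $\lambda^j_i=0$ for $i\notin S_{j-1}$; and define $\gamma^j_i=\mathbb{1}_{i\in S_j}\cdot\lambda^j_i$ for all $i\in I$. *)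

(* Defs.v *)
From mathcomp Require Import all_boot all_order all_algebra.
From mathcomp Require Import reals sequences.
Set Implicit Arguments. Unset Strict Implicit. Unset Printing Implicit Defensive.
Import Order.TTheory GRing.Theory Num.Theory.
Local Open Scope ring_scope.

Section CMK.
Variables (R : realType) (I : finType).

Definition config (w : I -> R) (k : nat) (C : {set I}) : bool :=
  (#|C| <= k)%N && (\sum_(i in C) w i <= 1).

(* a fractional solution is a vector indexed by configurations; we represent it
   as a function on all subsets that vanishes outside configurations *)
Definition cover (w : I -> R) (k : nat) (x : {set I} -> R) (i : I) : R :=
  \sum_(C : {set I} | config w k C && (i \in C)) x C.

Definition fnorm (w : I -> R) (k : nat) (x : {set I} -> R) : R :=
  \sum_(C : {set I} | config w k C) x C.

Definition vvec (v : I -> R) (y : I -> R) : R := \sum_i y i * v i.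
Definition vset (v : I -> R) (S : {set I}) : R := \sum_(i in S) v i.
Definition vfrac (w v : I -> R) (k : nat) (x : {set I} -> R) : R :=
  vvec v (cover w k x).

Definition is_frac (w : I -> R) (k : nat) (x : {set I} -> R) : Prop :=
  (forall C : {set I}, ~~ config w k C -> x C = 0) /\ (forall C : {set I}, 0 <= x C).

Definition feasible (w : I -> R) (k : nat) (x : {set I} -> R) : Prop :=
  is_frac w k x /\ (forall i, 0 <= cover w k x i <= 1).

Definition LP_feas (w : I -> R) (k : nat) (S : {set I}) (l : R)
  (x : {set I} -> R) : Prop :=
  feasible w k x /\ (forall C : {set I}, ~~ (C \subset S) -> x C = 0) /\ fnorm w k x = l.

Definition LP_approx (w v : I -> R) (k : nat) (eps : R) (S : {set I}) (l : R)
  (x : {set I} -> R) : Prop :=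
  LP_feas w k S l x /\
  forall y, LP_feas w k S l y -> (1 - eps) * vfrac w v k y <= vfrac w v k x.

(* outcomes: omega j b = R^j_b (iteration j >= 1, sample b < q) *)
Fixpoint Sset (q : nat) (omega : nat -> 'I_q -> {set I}) (j : nat) : {set I} :=
  match j with
  | 0 => setT
  | j'.+1 => Sset omega j' :\: \bigcup_(b < q) omega j'.+1 b
  end.

(* Pr(i \in S_j | F_{j-1}) at outcome omega: S_{j-1} is F_{j-1}-measurable and
   R^j_1..R^j_q are i.i.d. ~ x^j (x^j determined by the past) *)
Definition condP (w : I -> R) (k q : nat)
  (xpol : nat -> (nat -> 'I_q -> {set I}) -> {set I} -> R)
  (omega : nat -> 'I_q -> {set I}) (j : nat) (i : I) : R :=
  let x := xpol j omega in
  \sum_(t : {ffun 'I_q -> {set I}})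
     (\prod_(b < q) (x (t b) / fnorm w k x)) *
     (i \in Sset omega j.-1 :\: \bigcup_(b < q) t b)%:R.

Definition lamstep (w : I -> R) (k q : nat) (eps : R)
  (xpol : nat -> (nat -> 'I_q -> {set I}) -> {set I} -> R)
  (j : nat) (g : I -> R) (omega : nat -> 'I_q -> {set I}) (i : I) : R :=
  if i \in Sset omega j.-1 then
    (1 - j%:R * eps) / (1 - (j.-1)%:R * eps) / condP w k xpol omega j i * g i
  else 0.

Fixpoint gam (w : I -> R) (k q : nat) (eps : R)
  (xpol : nat -> (nat -> 'I_q -> {set I}) -> {set I} -> R)
  (Sstar : {set I}) (j : nat) (omega : nat -> 'I_q -> {set I}) (i : I) : R :=
  match j with
  | 0 => (i \in Sstar)%:R
  | j'.+1 => (i \in Sset omega j'.+1)%:R *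
             lamstep w k eps xpol j'.+1 (gam w k eps xpol Sstar j' omega) omega i
  end.

Definition lam (w : I -> R) (k q : nat) (eps : R)
  (xpol : nat -> (nat -> 'I_q -> {set I}) -> {set I} -> R)
  (Sstar : {set I}) (j : nat) (omega : nat -> 'I_q -> {set I}) (i : I) : R :=
  match j with
  | 0 => 0
  | j'.+1 => lamstep w k eps xpol j'.+1 (gam w k eps xpol Sstar j' omega) omega i
  end.

End CMK.

(* Main.v *)
Require Import Defs.
From mathcomp Require Import all_boot all_order all_algebra.
From mathcomp Require Import reals sequences.
From mathcomp Require Import ring lra.
Import Order.TTheory GRing.Theory Num.Theory.
Local Open Scope ring_scope.
Set Implicit Arguments. Unset Strict Implicit.

Lemma bern (R : realType) (c : R) n : c <= 1 -> 1 - n%:R * c <= (1 - c) ^+ n.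
Proof.
move=> c1; elim: n => [|n IH]; first by rewrite mul0r subr0 expr0.
rewrite exprS.
have h : (1 - c) * (1 - n%:R * c) <= (1 - c) * (1 - c) ^+ n.
  by apply: ler_wpM2l; lra.
apply: le_trans h; rewrite -natr1.
have : 0 <= n%:R * (c * c) :> R by rewrite mulr_ge0 // -expr2 sqr_ge0.
nra.
Qed.

Section K.
Variables (R : realType) (I : finType) (w : I -> R) (k q : nat).
Variable (x : {set I} -> R).
Hypothesis xf : is_frac w k x.

Lemma sumx_all : \sum_C x C = fnorm w k x.
Proof.
rewrite /fnorm (bigID (fun C => config w k C)) /= [X in _ + X]big1 ?addr0 //.
by move=> C h; apply: xf.1.
Qed.

Lemma sumx_in i : \sum_C x C * (i \in C)%:R = Defs.cover w k x i.
Proof.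
rewrite /Defs.cover [RHS]big_mkcond /=; apply: eq_bigr => C _.
case: (boolP (config w k C)) => hc /=.
  by case: (i \in C); rewrite ?mulr1 ?mulr0.
by rewrite xf.1 // mul0r; case: (i \in C).
Qed.

Lemma condP_eq (xpol : nat -> (nat -> 'I_q -> {set I}) -> {set I} -> R) omega j i :
  xpol j omega = x -> i \in Sset omega j.-1 ->
  condP w k xpol omega j i =
  (\sum_C x C / fnorm w k x * (i \notin C)%:R) ^+ q.
Proof.
move=> hx hi; rewrite /condP hx.
rewrite -[q in _ ^+ q]card_ord -prodr_const bigA_distr_bigA /=.
apply: eq_bigr => t _.
rewrite [RHS]big_split /=; congr (_ * _).
rewrite in_setD hi andbT.
case: (boolP (i \in \bigcup_(b < q) t b)) => h /=.
  case/bigcupP: h => b _ ib.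
  by rewrite (bigD1 b) //= ib mul0r.
rewrite big1 // => b _.
have -> : i \notin t b by apply: contra h => ib; apply/bigcupP; exists b.
by [].
Qed.
End K.
Section Main.
Variables (R : realType) (I : finType) (w v : I -> R) (m k : nat)
  (eps : R) (N q : nat)
  (xpol : nat -> (nat -> 'I_q -> {set I}) -> {set I} -> R).
Hypotheses (hm : (0 < m)%N) (heps : 0 < eps < 1 / 10)
  (hN2 : (N ^ 2)%:R = eps^-1 :> R) (hq : q%:R = eps * m%:R).
Hypothesis hLP : forall j (omega : nat -> 'I_q -> {set I}), (1 <= j <= N ^ 2)%N ->
     LP_approx w v k eps (Sset omega j.-1) (m%:R * (1 - (j.-1)%:R * eps))
       (xpol j omega).

Lemma keyP j omega i : (1 <= j)%N -> (j < N ^ 2)%N -> i \in Sset omega j.-1 ->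
  0 < (1 - j%:R * eps) / (1 - (j.-1)%:R * eps) <= condP w k xpol omega j i.
Proof.
move=> j1 jN hi.
have hj : (j.-1).+1 = j by rewrite prednK.
set a := (j.-1)%:R : R.
have ja : j%:R = a + 1 :> R by rewrite -hj -natr1.
rewrite ja.
have e0 : 0 < eps by case/andP: heps.
have jle : (a + 2) * eps <= 1.
  have : ((j.+1)%:R : R) <= (N ^ 2)%:R by rewrite ler_nat.
  rewrite hN2 -natr1 ja -addrA => h.
  have := ler_wpM2r (ltW e0) h. by rewrite mulVf ?gt_eqF.
have a0 : 0 <= a by rewrite /a ler0n.
have D0 : 0 < 1 - a * eps by nra.
have hmR : 0 < m%:R :> R by rewrite ltr0n.
have [[[[xz xn] xc] [_ hF]] _] := @hLP j omega (ltac:(rewrite j1 /=; exact: ltnW)).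
set x := xpol j omega in xz xn xc hF.
set F := fnorm w k x in hF.
have F0 : 0 < F by rewrite hF /a mulr_gt0.
rewrite (condP_eq w k (erefl x) hi).
set c := Defs.cover w k x i.
have hc : 0 <= c <= 1 := xc i.
have hy : \sum_C x C / F * (i \notin C)%:R = 1 - c / F.
  have -> : \sum_C x C / F * (i \notin C)%:R =
     (\sum_C x C - \sum_C x C * (i \in C)%:R) / F.
    rewrite mulrBl !big_distrl -sumrB; apply: eq_bigr => C _.
    by case: (i \in C) => /=; rewrite ?mulr0 ?mulr1 ?subr0; ring.
  rewrite (sumx_all (conj xz xn)) (sumx_in (conj xz xn)) -/F -/c.
  by rewrite mulrBl mulfV ?gt_eqF.
have y0 : 0 <= \sum_C x C / F * (i \notin C)%:R.
  by apply: sumr_ge0 => C _; rewrite !mulr_ge0 // invr_ge0 ltW.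
rewrite hy in y0 *.
have hb := @bern _ (c / F) q (ltac:(lra)).
apply/andP; split; first by rewrite divr_gt0 //; nra.
apply: le_trans hb.
have hqF : q%:R / F = eps / (1 - a * eps).
  rewrite hq hF; field; apply/andP; split; rewrite ?gt_eqF //.
have : q%:R * (c / F) <= q%:R / F.
  rewrite mulrA [_ * c]mulrC -mulrA ler_piMl //; first by rewrite divr_ge0 // ltW.
  by case/andP: hc.
rewrite hqF => h.
have -> : (1 - (a + 1) * eps) / (1 - a * eps) = 1 - eps / (1 - a * eps).
  by field; rewrite gt_eqF.
lra.
Qed.
End Main.
From mathcomp Require Import zify.
Unset Implicit Arguments.
Theorem lemma4p6 (R : realType) (I : finType) (w v : I -> R) (m k : nat)
  (eps : R) (N q : nat)
  (Cstar : 'I_m -> {set I})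
  (xpol : nat -> (nat -> 'I_q -> {set I}) -> {set I} -> R) :
  (forall i, 0 <= w i <= 1) ->
  (forall i, 0 <= v i) ->
  (0 < m)%N -> (0 < k)%N ->
  0 < eps < 1 / 10 ->
  Num.sqrt (eps^-1) = N%:R ->
  expR (expR (eps ^- 30)) < m%:R ->
  q%:R = eps * m%:R ->
  (forall b, config w k (Cstar b)) ->
  (forall D : 'I_m -> {set I}, (forall b, config w k (D b)) ->
     vset v (\bigcup_(b < m) D b) <= vset v (\bigcup_(b < m) Cstar b)) ->
  (forall j (omega omega' : nat -> 'I_q -> {set I}),
     (forall j', (j' < j)%N -> omega j' = omega' j') ->
     xpol j omega = xpol j omega') ->
  (forall j (omega : nat -> 'I_q -> {set I}), (1 <= j <= N ^ 2)%N ->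
     LP_approx w v k eps (Sset omega j.-1) (m%:R * (1 - (j.-1)%:R * eps))
       (xpol j omega)) ->
  forall j, (1 <= j <= N ^ 2 - 1)%N ->
  forall (omega : nat -> 'I_q -> {set I}) (i : I),
    lam w k eps xpol (\bigcup_(b < m) Cstar b) j omega i <= 1 /\
    gam w k eps xpol (\bigcup_(b < m) Cstar b) j omega i <= 1.
Proof.
move=> hw hv hm hk heps hN hexp hq hC hopt hmeas hLP j hj omega i.
have e0 : 0 < eps by case/andP: heps.
have hN2 : (N ^ 2)%:R = eps^-1 :> R.
  by rewrite natrX -hN sqr_sqrtr // invr_ge0 ltW.
have K := keyP hm heps hN2 hq hLP.
have LS : forall j' g, (1 <= j' <= j)%N -> (forall i, g i <= 1) ->
    forall i, lamstep w k eps xpol j' g omega i <= 1.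
  move=> j' g /andP[j1 jj] hg i'; rewrite /lamstep; case: ifP => hi; last exact: ler01.
  have jN : (j' < N ^ 2)%N by lia.
  have /andP[r0 rP] := K _ _ _ j1 jN hi.
  have P0 := lt_le_trans r0 rP.
  have a1 : (1 - j'%:R * eps) / (1 - (j'.-1)%:R * eps) / condP w k xpol omega j' i' <= 1.
    by rewrite ler_pdivrMr // mul1r.
  have a0 : 0 <= (1 - j'%:R * eps) / (1 - (j'.-1)%:R * eps) / condP w k xpol omega j' i'.
    by rewrite divr_ge0 // ltW.
  have := hg i'; nra.
have GS : forall j', (j' <= j)%N -> forall i,
    gam w k eps xpol (\bigcup_(b < m) Cstar b) j' omega i <= 1.
  elim=> [|j' IH] hj' i' /=.
    by case: (i' \in _).
  case: (i' \in Sset omega j'.+1) => /=; rewrite ?mul1r ?mul0r ?ler01 //.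
  apply: LS; first by lia.
  by apply: IH; lia.
split; last exact: GS.
move: hj GS LS; case: j => //= j' hj GS LS.
apply: LS; first by lia.
by apply: GS; lia.
Qed.
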